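(* Let $(M,g,S)$ be as in the context, let $p\in M$, and let $u\in T_pM$ induce an $S$-basis, with $\varphi=\angle(u,Su)$. Then: (i) $u$ is space-like if and only if $\varphi\in(\frac{\pi}{4},\frac{\pi}{2})$; (ii) $u$ is isotropic if and only if $\varphi=\frac{\pi}{2}$; (iii) $u$ is time-like if and only if $\varphi\in(\frac{\pi}{2},\frac{3\pi}{4})$.
   Context: $M$ is a 4-dimensional differentiable manifold with a positive definite (Riemannian) metric $g$ and a tensor field $S$ of type $(1,1)$ whose components in some local coordinate system form the matrix with rows $(0,1,0,0)$, $(0,0,1,0)$, $(0,0,0,1)$, $(-1,0,0,0)$; hence $S^4=-\mathrm{id}$. It is assumed that $g(Su,Sv)=g(u,v)$ for all vector fields $u,v$. The associated metric is $\tilde g(u,v)=g(u,Sv)+g(Su,v)$. A vector $u$ is space-like if $\tilde g(u,u)>0$, time-like if $\tilde g(u,u)<0$, and isotropic if $u\neq 0$ and $\tilde g(u,u)=0$. A vector $u\in T_pM$ induces an $S$-basis if $\{u,Su,S^2u,S^3u\}$ is a basis of $T_pM$. Norms and angles are taken with respect to $g$: $\|u\|=\sqrt{g(u,u)}$, $\cos\angle(u,v)=g(u,v)/(\|u\|\|v\|)$. It is known that if $u$ induces an $S$-basis then $\varphi=\angle(u,Su)$ satisfies $\frac{\pi}{4}<\varphi<\frac{3\pi}{4}$. *)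

(* Defs.v *)
From HB Require Import structures.
From mathcomp Require Import all_boot all_order all_algebra.
From mathcomp Require Import reals trigo.
Set Implicit Arguments. Unset Strict Implicit. Unset Printing Implicit Defensive.
Import Order.TTheory GRing.Theory Num.Theory.
Local Open Scope ring_scope.

(* The tangent space T_pM is identified, via the local coordinate system in
   which S has the prescribed matrix, with column vectors 'cV[R]_4. *)

Definition Smx {R : realType} : 'M[R]_4 :=
  \matrix_(i < 4, j < 4)
    (if (i == 3 :> nat) then (if (j == 0 :> nat) then -1 else 0)
     else (if (j == i.+1 :> nat) then 1 else 0)).

Definition gform {R : realType} (G : 'M[R]_4) (u v : 'cV[R]_4) : R :=
  (u^T *m G *m v) 0 0.

Definition riemannian_metric {R : realType} (G : 'M[R]_4) : Prop :=
  G^T = G /\ (forall v : 'cV[R]_4, v != 0 -> 0 < gform G v v).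

Definition S_isometric {R : realType} (G : 'M[R]_4) : Prop :=
  forall u v : 'cV[R]_4, gform G (Smx *m u) (Smx *m v) = gform G u v.

Definition gtilde {R : realType} (G : 'M[R]_4) (u v : 'cV[R]_4) : R :=
  gform G u (Smx *m v) + gform G (Smx *m u) v.

Definition space_like {R : realType} (G : 'M[R]_4) (u : 'cV[R]_4) : Prop :=
  0 < gtilde G u u.
Definition time_like {R : realType} (G : 'M[R]_4) (u : 'cV[R]_4) : Prop :=
  gtilde G u u < 0.
Definition isotropic {R : realType} (G : 'M[R]_4) (u : 'cV[R]_4) : Prop :=
  u != 0 /\ gtilde G u u = 0.

(* u induces an S-basis: {u, Su, S^2u, S^3u} is a basis of T_pM, i.e. the
   4x4 matrix whose j-th column is S^j u is invertible. *)
Definition induces_S_basis {R : realType} (u : 'cV[R]_4) : Prop :=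
  (\matrix_(i < 4, j < 4) ((Smx ^+ j *m u) i 0)) \in unitmx.

Definition gnorm {R : realType} (G : 'M[R]_4) (u : 'cV[R]_4) : R :=
  Num.sqrt (gform G u u).
Definition gangle {R : realType} (G : 'M[R]_4) (u v : 'cV[R]_4) : R :=
  acos (gform G u v / (gnorm G u * gnorm G v)).

(* Main.v *)
Require Import Defs.
From HB Require Import structures.
From mathcomp Require Import all_boot all_order all_algebra.
From mathcomp Require Import reals trigo.
From mathcomp Require Import ring lra.
Import Order.TTheory GRing.Theory Num.Theory.
Local Open Scope ring_scope.

Section A.
Variable R : realType.
Implicit Types (G : 'M[R]_4) (x y z : 'cV[R]_4).

Lemma gformDl G x y z : gform G (x + y) z = gform G x z + gform G y z.
Proof. by rewrite /gform linearD /= !mulmxDl mxE. Qed.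
Lemma gformDr G x y z : gform G z (x + y) = gform G z x + gform G z y.
Proof. by rewrite /gform !mulmxDr mxE. Qed.
Lemma gformZl G k x z : gform G (k *: x) z = k * gform G x z.
Proof. by rewrite /gform linearZ /= -!scalemxAl mxE. Qed.
Lemma gformZr G k x z : gform G z (k *: x) = k * gform G z x.
Proof. by rewrite /gform -scalemxAr mxE. Qed.
Lemma gformNl G x z : gform G (- x) z = - gform G x z.
Proof. by rewrite -scaleN1r gformZl mulN1r. Qed.
Lemma gformNr G x z : gform G z (- x) = - gform G z x.
Proof. by rewrite -scaleN1r gformZr mulN1r. Qed.
Lemma gformC G x y : G^T = G -> gform G x y = gform G y x.
Proof.
move=> GT; rewrite /gform.
have E : forall A : 'M[R]_1, A 0 0 = A^T 0 0 by move=> A; rewrite mxE.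
rewrite [LHS]E.
by rewrite !trmx_mul trmxK GT mulmxA.
Qed.

Lemma Sent x (i : 'I_4) : (Smx *m x) i 0 =
  if (i:nat) == 3 then - x 0 0 else x (inord i.+1) 0.
Proof.
rewrite mxE !big_ord_recl big_ord0 !mxE.
case: i => [[|[|[|[|i]]]] Hi] //=;
rewrite ?mul0r ?mul1r ?add0r ?addr0 ?mulN1r; try congr (- x _ 0); congr (x _ 0); apply/val_inj; rewrite /= ?inordK //.
Qed.

Lemma Sent' x k : (k < 4)%N -> (Smx *m x) (inord k) 0 =
  if k == 3 then - x 0 0 else x (inord k.+1) 0.
Proof. by move=> hk; rewrite Sent inordK. Qed.

Lemma S4 x : Smx *m (Smx *m (Smx *m (Smx *m x))) = - x.
Proof.
apply/matrixP => i j; rewrite ord1 [RHS]mxE.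
have E0 : (0 : 'I_4) = inord 0 by apply/val_inj; rewrite /= inordK.
have -> : i = inord i by apply/val_inj; rewrite /= inordK.
case: i => [[|[|[|[|i]]]] Hi] //=; rewrite ?E0;
 rewrite ?(@Sent' _ 0) //= ?(@Sent' _ 1) //= ?(@Sent' _ 2) //= ?(@Sent' _ 3) //= ?E0;
 rewrite ?(@Sent' _ 0) //= ?(@Sent' _ 1) //= ?(@Sent' _ 2) //= ?(@Sent' _ 3) //= ?E0;
 rewrite ?(@Sent' _ 0) //= ?(@Sent' _ 1) //= ?(@Sent' _ 2) //= ?(@Sent' _ 3) //= ?E0;
 rewrite ?(@Sent' _ 0) //= ?(@Sent' _ 1) //= ?(@Sent' _ 2) //= ?(@Sent' _ 3) //= ?E0.
Qed.

End A.


Lemma S_mul_expr (R : realType) (u : 'cV[R]_4) :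
  [/\ Smx ^+ 0 *m u = u, Smx ^+ 1 *m u = Smx *m u,
      Smx ^+ 2 *m u = Smx *m (Smx *m u)
    & Smx ^+ 3 *m u = Smx *m (Smx *m (Smx *m u))].
Proof.
split; first by rewrite expr0 mul1mx.
- by rewrite expr1.
- by rewrite !exprS expr0 mulr1 -!mulmxE !mulmxA.
- by rewrite !exprS expr0 mulr1 -!mulmxE !mulmxA.
Qed.

Definition colv {R : realType} (c0 c1 c2 c3 : R) : 'cV[R]_4 :=
  \col_(i < 4) [:: c0; c1; c2; c3]`_i.

Lemma Mcolv_gen (R : realType) (M : 'M[R]_4) (w0 w1 w2 w3 : 'cV[R]_4) c0 c1 c2 c3 :
  (forall i, M i 0 = w0 i 0) -> (forall i, M i 1 = w1 i 0) ->
  (forall i, M i 2 = w2 i 0) -> (forall i, M i 3 = w3 i 0) ->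
  M *m colv c0 c1 c2 c3 = c0 *: w0 + c1 *: w1 + c2 *: w2 + c3 *: w3.
Proof.
move=> h0 h1 h2 h3.
apply/matrixP => i j; rewrite ord1 !mxE !big_ord_recl big_ord0 !mxE /=.
have -> : (ord0 : 'I_4) = 0 by apply/val_inj.
have -> : (lift ord0 ord0 : 'I_4) = 1 by apply/val_inj.
have -> : (lift ord0 (lift ord0 ord0) : 'I_4) = 2 by apply/val_inj.
have -> : (lift ord0 (lift ord0 (lift ord0 ord0)) : 'I_4) = 3 by apply/val_inj.
rewrite h0 h1 h2 h3; ring.
Qed.

Lemma Mcolv (R : realType) (u : 'cV[R]_4) c0 c1 c2 c3 :
  (\matrix_(i < 4, j < 4) ((Smx ^+ j *m u) i 0)) *m colv c0 c1 c2 c3 =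
  c0 *: u + c1 *: (Smx *m u) + c2 *: (Smx *m (Smx *m u))
  + c3 *: (Smx *m (Smx *m (Smx *m u))).
Proof.
have [e0 e1 e2 e3] := @S_mul_expr R u.
apply: Mcolv_gen => i; rewrite mxE.
- by rewrite e0.
- by rewrite e1.
- by rewrite e2.
- by rewrite e3.
Qed.

Lemma colv_neq0 (R : realType) (c0 c1 c2 c3 : R) : c0 != 0 -> colv c0 c1 c2 c3 != 0.
Proof.
move=> h; apply/eqP => /matrixP /(_ 0 0); rewrite !mxE /= => E.
by rewrite E eqxx in h.
Qed.

Lemma unit_inj (R : realType) (M : 'M[R]_4) (x : 'cV[R]_4) :
  M \in unitmx -> x != 0 -> M *m x != 0.
Proof.
move=> hM hx; apply/eqP => E; move/eqP: hx; apply.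
by rewrite -(mulKmx hM x) E mulmx0.
Qed.
Lemma sq_lt (R : realFieldType) (x c : R) : 0 < c -> 2 * x ^+ 2 < 1 -> 2 * c ^+ 2 = 1 -> x < c /\ - c < x.
Proof.
move=> c0 h1 h2; split.
- rewrite ltNge; apply/negP => h; nra.
- rewrite ltNge; apply/negP => h; nra.
Qed.

Theorem theorem2p2 (R : realType) (G : 'M[R]_4) (u : 'cV[R]_4) :
  riemannian_metric G -> S_isometric G -> induces_S_basis u ->
  let phi := gangle G u (Smx *m u) in
  [/\ space_like G u <-> pi / 4 < phi < pi / 2,
      isotropic G u <-> phi = pi / 2
    & time_like G u <-> pi / 2 < phi < 3 * pi / 4].
Proof.
move=> [GT Gpos] Siso Hb phi.
have hM := @Mcolv R u.
set u1 := Smx *m u in hM phi *; set u2 := Smx *m u1 in hM *.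
set u3 := Smx *m u2 in hM *.
have S4u : Smx *m u3 = - u by exact: (@S4 R u).
have gC x y := @gformC R G x y GT.
have h11 : gform G u1 u1 = gform G u u by exact: Siso.
have h12 : gform G u1 u2 = gform G u u1 by exact: Siso.
have h13 : gform G u1 u3 = gform G u u2 by exact: Siso.
have h33 : gform G u3 u3 = gform G u u by rewrite Siso Siso Siso.
have h23 : gform G u2 u3 = gform G u u1 by rewrite Siso Siso.
have hc : gform G u u2 = 0.
  have := Siso u1 u3; rewrite S4u gformNr h13 gC; lra.
have h03 : gform G u u3 = - gform G u u1.
  have := Siso u2 u3; rewrite S4u gformNr h23 gC; lra.
have unz : u != 0.
  have := @unit_inj R _ _ Hb (@colv_neq0 R 1 0 0 0 (oner_neq0 R)).
  by rewrite hM !scale0r !scale1r !addr0.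
have apos : 0 < gform G u u by exact: Gpos.
set a := gform G u u in h11 h33 apos *.
set b := gform G u u1 in h12 h23 h03 *.
have key : 2 * b ^+ 2 < a ^+ 2.
  have := Gpos _ (@unit_inj R _ _ Hb (@colv_neq0 R a (- b) 0 b (lt0r_neq0 apos))).
  rewrite hM !gformDl !gformDr !gformZl !gformZr.
  rewrite ![gform G u1 u]gC ![gform G u3 u]gC ![gform G u3 u1]gC.
  rewrite h11 h33 h13 hc h03 -/b -/a => hp.
  nra.
have hphi : phi = acos (b / a).
  by rewrite /phi /gangle /Defs.gnorm h11 -/a -/b -expr2 sqr_sqrtr ?(ltW apos).
have hgt : gtilde G u u = 2 * b.
  rewrite /gtilde -/u1 [gform G u1 u]gC -/b; lra.
set x := b / a in hphi.
have hxa : x * a = b by rewrite /x divfK ?lt0r_neq0.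
have hx2 : 2 * x ^+ 2 < 1.
  have : 2 * b ^+ 2 < 1 * a ^+ 2 by rewrite mul1r.
  rewrite -hxa exprMn mulrA ltr_pM2r ?exprn_gt0 //.
have hxI : -1 <= x <= 1 by apply/andP; split; nra.
have hct : cos phi = x by rewrite hphi acosK // in_itv.
have hp0 : 0 <= phi by rewrite hphi acos_ge0.
have hppi : phi <= pi by rewrite hphi acos_lepi.
have pi0 := @pi_gt0 R.
pose c := cos (pi / 4 : R).
have c0 : 0 < c.
  apply: cos_gt0_pihalf; apply/andP; split; lra.
have c2 : 2 * c ^+ 2 = 1.
  have := cos_mulr2n (pi / 4 : R).
  have -> : (pi / 4 : R) *+ 2 = pi / 2 by rewrite mulr2n; field.
  rewrite cos_pihalf /c; lra.
pose s := sin (pi / 4 : R).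
have s0 : 0 < s by apply: sin_gt0_pi; apply/andP; split; lra.
have s2 : s ^+ 2 = 1 - c ^+ 2 by rewrite /s sin2cos2.
have c34 : cos (3 * pi / 4) = - s.
  have -> : 3 * pi / 4 = pi / 4 + pi / 2 :> R by field.
  by rewrite cosDpihalf.
have lc := @ltr_cos R.
have I (y : R) : 0 <= y <= pi -> y \in `[0, pi] by rewrite in_itv.
have Iphi : phi \in `[0, pi] by rewrite in_itv /= hp0 hppi.
have I4 : (pi / 4 : R) \in `[0, pi] by rewrite in_itv /=; apply/andP; split; lra.
have I2 : (pi / 2 : R) \in `[0, pi] by rewrite in_itv /=; apply/andP; split; lra.
have I34 : (3 * pi / 4 : R) \in `[0, pi] by rewrite in_itv /=; apply/andP; split; lra.
have L4 : pi / 4 < phi by rewrite -(lc _ _ I4 Iphi) hct; case: (@sq_lt R _ _ c0 hx2 c2).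
have L34 : phi < 3 * pi / 4.
  rewrite -(lc _ _ Iphi I34) hct c34.
  have s2' : 2 * s ^+ 2 = 1 by rewrite s2; lra.
  by case: (@sq_lt R _ _ s0 hx2 s2').
have E2 : (phi < pi / 2) = (0 < x) by rewrite -(lc _ _ Iphi I2) hct cos_pihalf.
have E2' : (pi / 2 < phi) = (x < 0) by rewrite -(lc _ _ I2 Iphi) hct cos_pihalf.
have hb : (0 < b) = (0 < x) by rewrite -hxa pmulr_lgt0.
have hb' : (b < 0) = (x < 0) by rewrite -hxa pmulr_llt0.
split.
- rewrite /space_like hgt pmulr_rgt0 // hb -E2 L4; split => //; by case/andP.
- rewrite /isotropic hgt; split.
  + case=> _ /eqP; rewrite mulf_eq0 pnatr_eq0 /= => /eqP hb0.
    by rewrite hphi /x hb0 mul0r acos0.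
  + move=> hpi; split => //.
    have : x = 0 by rewrite -hct hpi cos_pihalf.
    by move=> hx0; rewrite -hxa hx0 mul0r mulr0.
- rewrite /time_like hgt pmulr_rlt0 // hb' -E2' L34 andbT; split => //.
Qed.
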